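(* Let $p(x)\in\mathbb{C}((x))$ and set $\phi(x,z)=e^{zp(x)\frac{d}{dx}}x=\sum_{n\ge0}\frac{z^n}{n!}\left(p(x)\frac{d}{dx}\right)^nx\in\mathbb{C}((x))[[z]]$. Then $\phi(x,z)$ is an associate of the additive formal group $F(x,y)=x+y$. Moreover, every associate $\phi(x,z)$ of $F(x,y)=x+y$ is of this form, with $p(x)$ uniquely determined (namely $p(x)=\frac{\partial\phi}{\partial z}(x,0)$).
   Context: An associate of the one-dimensional additive formal group $F(x,y)=x+y$ is a formal series $\phi(x,z)\in\mathbb{C}((x))[[z]]$ such that $\phi(x,0)=x$ and $\phi(\phi(x,x_2),x_0)=\phi(x,x_0+x_2)$, where, writing $\phi(x,z)=\sum_{n\ge0}f_n(x)z^n$, $\phi(\phi(x,x_2),x_0):=\sum_n f_n(\phi(x,x_2))x_0^n\in\mathbb{C}((x))[[x_0,x_2]]$ (for $f\in\mathbb{C}((x))$, $f(\phi(x,x_2))$ is defined using that $\phi(x,x_2)$ is a unit of $\mathbb{C}((x))[[x_2]]$). *)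

(* Defs.v *)
(* Formal Laurent series over a field K are represented by
   their coefficient functions  int -> K  together with the predicate
   [is_laurent] (support bounded below).  Elements of K((x))[[z]] are
   sequences  nat -> (int -> K)  of Laurent series (coefficients of z^n). *)
From HB Require Import structures.
From mathcomp Require Import all_boot all_order all_algebra.
From mathcomp.real_closed Require Import complex.
From mathcomp Require Import reals.
From Stdlib Require Import ClassicalEpsilon.

Set Implicit Arguments.
Unset Strict Implicit.
Unset Printing Implicit Defensive.

Import Order.TTheory GRing.Theory Num.Theory.
Local Open Scope ring_scope.

Section Laurent.
Variable K : fieldType.

Definition laurent := int -> K.

Definition is_laurent (f : laurent) : Prop :=
  exists N : int, forall n : int, n < N -> f n = 0.

Definition lbound (f : laurent) : int :=
  epsilon (inhabits 0) (fun N : int => forall n : int, n < N -> f n = 0).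

Definition lorder (f : laurent) : int :=
  epsilon (inhabits 0) (fun v : int => f v != 0 /\ forall n : int, n < v -> f n = 0).

Definition lzero : laurent := fun _ => 0.
Definition lone : laurent := fun n => if n == 0 then 1 else 0.
Definition lx : laurent := fun n => if n == 1 then 1 else 0.
Definition ladd (f g : laurent) : laurent := fun n => f n + g n.
Definition lopp (f : laurent) : laurent := fun n => - f n.
Definition lscale (c : K) (f : laurent) : laurent := fun n => c * f n.

Definition lmul (f g : laurent) : laurent := fun n =>
  let a := lbound f in let b := lbound g in
  if a + b <= n then
    \sum_(i < (absz (n - a - b)%R).+1) f (a + i%:Z) * g (n - a - i%:Z)
  else 0.

Definition lderiv (f : laurent) : laurent := fun n => (n + 1)%:~R * f (n + 1).

(* inverse of a power series u with u 0 != 0: first n+1 coefficients *)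
Fixpoint ps_inv_seq (u : nat -> K) (n : nat) : seq K :=
  match n with
  | 0%N => [:: (u 0%N)^-1]
  | n'.+1 => let s := ps_inv_seq u n' in
      rcons s (- (u 0%N)^-1 * \sum_(k < n'.+1) u k.+1 * nth 0 s (n' - k))
  end.
Definition ps_inv (u : nat -> K) (i : nat) : K := nth 0 (ps_inv_seq u i) i.

Definition linv (g : laurent) : laurent := fun n =>
  let v := lorder g in
  if 0 <= n + v then ps_inv (fun i => g (v + i%:Z)) (absz (n + v)) else 0.

Definition lser := nat -> laurent.

Definition sone : lser := fun j => if j == 0%N then lone else lzero.
Definition smul (psi chi : lser) : lser := fun j =>
  \big[ladd/lzero]_(i < j.+1) lmul (psi i) (chi (j - i)%N).

(* inverse in K((x))[[z]] of a series whose constant term is a unit *)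
Fixpoint sinv_seq (psi : lser) (n : nat) : seq laurent :=
  match n with
  | 0%N => [:: linv (psi 0%N)]
  | n'.+1 => let s := sinv_seq psi n' in
      rcons s (lopp (lmul (linv (psi 0%N))
        (\big[ladd/lzero]_(k < n'.+1) lmul (psi k.+1) (nth lzero s (n' - k)))))
  end.
Definition sinv (psi : lser) : lser := fun j => nth lzero (sinv_seq psi j) j.

Definition spow (psi : lser) (m : int) : lser :=
  if 0 <= m then iter (absz m) (smul psi) sone
  else iter (absz m) (smul (sinv psi)) sone.

(* partial sums  sum_{-M <= m <= M} f_m psi^m  of f(psi), f = sum_m f_m x^m *)
Definition psum (f : laurent) (psi : lser) (M : nat) : lser := fun j k =>
  \sum_(i < (2 * M).+1) f (i%:Z - M%:Z) * spow psi (i%:Z - M%:Z) j k.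

(* subst_eq f psi chi : the series f(psi) (defined as sum_m f_m psi^m, a
   convergent sum) equals chi, i.e. each coefficient of the partial sums
   eventually equals the corresponding coefficient of chi *)
Definition subst_eq (f : laurent) (psi chi : lser) : Prop :=
  forall (j : nat) (k : int), exists M0 : nat, forall M : nat,
    (M0 <= M)%N -> psum f psi M j k = chi j k.

(* phi is an associate of the additive formal group F(x,y) = x + y:
   phi in K((x))[[z]], phi(x,0) = x, and phi(phi(x,x2),x0) = phi(x,x0+x2).
   Comparing coefficients of x0^n: f_n(phi(x,x2)) = sum_m C(n+m,n) f_{n+m} x2^m,
   the coefficient of x0^n in phi(x,x0+x2) = sum_k f_k (x0+x2)^k. *)
Definition associate (phi : lser) : Prop :=
  (forall n, is_laurent (phi n)) /\
  (forall k, phi 0%N k = lx k) /\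
  (forall n : nat, subst_eq (phi n) phi
      (fun m k => ('C(n + m, n))%:R * phi (n + m)%N k)).

Definition phi_exp (p : laurent) : lser := fun n =>
  lscale (n`!%:R)^-1 (iter n (fun g => lmul p (lderiv g)) lx).

End Laurent.

(* Main.v *)
Require Import Defs.
From HB Require Import structures.
From mathcomp Require Import all_boot all_order all_algebra.
From mathcomp.real_closed Require Import complex.
From mathcomp Require Import reals.
From mathcomp Require Import zify ring.
From mathcomp Require Import zify.
From Stdlib Require Import FunctionalExtensionality ClassicalEpsilon.
Set Implicit Arguments.
Unset Strict Implicit.
Unset Printing Implicit Defensive.
Import Order.TTheory GRing.Theory Num.Theory.
Local Open Scope ring_scope.
Section S.
Variable K : fieldType.
Implicit Types (f g h : laurent K).

Definition supp_ge f (A : int) := forall n, n < A -> f n = 0.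

Lemma laurent_lbound f : is_laurent f -> supp_ge f (lbound f).
Proof. move=> H; rewrite /lbound; exact: epsilon_spec. Qed.

Lemma supp_laurent f A : supp_ge f A -> is_laurent f.
Proof. by exists A. Qed.

Lemma supp_ge_le f A B : supp_ge f A -> B <= A -> supp_ge f B.
Proof. move=> H hB n hn; apply: H; lia. Qed.

Definition wsum (lo hi : int) (F : int -> K) :=
  if lo <= hi then \sum_(i < (absz (hi - lo)).+1) F (lo + i%:Z) else 0.

Lemma sum_nat_zero (a b : nat) (G : nat -> K) :
  (forall i, (a <= i < b)%N -> G i = 0) -> \sum_(a <= i < b) G i = 0.
Proof.
move=> H; rewrite big_nat_cond big1 // => i /andP[hi _]; exact: H.
Qed.

Lemma wsum_ext lo hi lo' hi' F :
  (forall t, t < lo \/ hi < t -> F t = 0) -> lo' <= lo -> hi <= hi' ->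
  wsum lo' hi' F = wsum lo hi F.
Proof.
move=> HF h1 h2; rewrite /wsum.
case: (lerP lo hi) => hlh; last first.
  case: ifP => _ //; rewrite big1 // => i _; apply: HF; lia.
have -> : (lo' <= hi') = true by apply/idP; lia.
set d := absz (lo - lo'); set L := absz (hi - lo); set e := absz (hi' - hi).
have -> : (absz (hi' - lo')).+1 = (d + L.+1 + e)%N by rewrite /d /L /e; lia.
rewrite -(big_mkord xpredT (fun i : nat => F (lo' + i%:Z))).
rewrite (big_cat_nat _ (n := d)) /=; [|lia..].
rewrite (big_cat_nat _ (m := d) (n := (d + L.+1)%N)) /=; [|lia..].
rewrite sum_nat_zero ?add0r; last by move=> i hh; apply: HF; lia.
rewrite [X in _ + X]sum_nat_zero ?addr0; last by move=> i hh; apply: HF; lia.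
rewrite -{1}(add0n d) big_addn addKn big_mkord.
apply: eq_bigr => i _; congr F; rewrite /d; lia.
Qed.

Lemma wsum_eq lo1 hi1 lo2 hi2 F :
  (forall t, t < lo1 \/ hi1 < t -> F t = 0) ->
  (forall t, t < lo2 \/ hi2 < t -> F t = 0) ->
  wsum lo1 hi1 F = wsum lo2 hi2 F.
Proof.
move=> H1 H2.
have H : forall t, t < Num.max lo1 lo2 \/ Num.min hi1 hi2 < t -> F t = 0.
  move=> t; rewrite lt_max gt_min => -[/orP[]|/orP[]] h.
  by apply: H1; left. by apply: H2; left. by apply: H1; right. by apply: H2; right.
rewrite (wsum_ext H) ?le_max ?ge_min ?lexx //.
by rewrite (wsum_ext H) ?le_max ?ge_min ?lexx ?orbT.
Qed.

Lemma lmul_w f g A B : supp_ge f A -> supp_ge g B -> is_laurent f -> is_laurent g ->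
  forall n, lmul f g n = wsum A (n - B) (fun t => f t * g (n - t)).
Proof.
move=> hA hB lf lg n; have ha := laurent_lbound lf; have hb := laurent_lbound lg.
have -> : lmul f g n = wsum (lbound f) (n - lbound g) (fun t => f t * g (n - t)).
  rewrite /lmul /wsum.
  have -> : (lbound f + lbound g <= n) = (lbound f <= n - lbound g).
    by apply/idP/idP => h; lia.
  case: ifP => // _.
  have -> : absz (n - lbound f - lbound g)%R = absz (n - lbound g - lbound f)%R by rewrite addrAC.
  by apply: eq_bigr => i _; rewrite opprD addrA.
apply: wsum_eq => t [] h.
- by rewrite ha // mul0r.
- by rewrite hb ?mulr0 //; lia.
- by rewrite hA // mul0r.
- by rewrite hB ?mulr0 //; lia.
Qed.

Lemma lmul_nf f g A B : supp_ge f A -> supp_ge g B -> is_laurent f -> is_laurent g ->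
  forall i : nat, lmul f g (A + B + i%:Z) =
    \sum_(j < i.+1) f (A + j%:Z) * g (B + (i - j)%N%:Z).
Proof.
move=> hA hB lf lg i; rewrite (lmul_w hA hB lf lg) /wsum.
have -> : (A <= A + B + i%:Z - B) = true by apply/idP; lia.
have -> : absz (A + B + i%:Z - B - A)%R = i by lia.
apply: eq_bigr => j _; congr (_ * g _); have := ltn_ord j; lia.
Qed.

Lemma lmul_supp f g A B : supp_ge f A -> supp_ge g B -> is_laurent f -> is_laurent g ->
  supp_ge (lmul f g) (A + B).
Proof.
move=> hA hB lf lg n hn; rewrite (lmul_w hA hB lf lg) /wsum.
by case: ifP => // h; lia.
Qed.

Lemma lmul_laurent f g : is_laurent f -> is_laurent g -> is_laurent (lmul f g).
Proof.
move=> lf lg; exact: (supp_laurent (lmul_supp (laurent_lbound lf) (laurent_lbound lg) lf lg)).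
Qed.

End S.
Section S2.
Variable K : fieldType.
Implicit Types (f g h : laurent K).

Lemma eq_from_nf (u v : laurent K) C : supp_ge u C -> supp_ge v C ->
  (forall i : nat, u (C + i%:Z) = v (C + i%:Z)) -> u = v.
Proof.
move=> hu hv H; apply: functional_extensionality => n.
case: (ltrP n C) => hn; first by rewrite hu ?hv.
have -> : n = C + (absz (n - C)%R)%:Z by lia.
exact: H.
Qed.

Definition mono (m : int) : laurent K := fun n => if n == m then 1 else 0.

Lemma mono_supp m : supp_ge (mono m) m.
Proof. move=> n hn; rewrite /mono; case: eqP => // e; lia. Qed.
Lemma mono_laurent m : is_laurent (mono m).
Proof. by exists m; apply: mono_supp. Qed.
Lemma lx_mono : lx K = mono 1. Proof. by []. Qed.
Lemma lone_mono : lone K = mono 0. Proof. by []. Qed.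

Lemma ladd_supp f g A : supp_ge f A -> supp_ge g A -> supp_ge (ladd f g) A.
Proof. by move=> h1 h2 n hn; rewrite /ladd h1 ?h2 ?addr0. Qed.
Lemma ladd_laurent f g : is_laurent f -> is_laurent g -> is_laurent (ladd f g).
Proof.
move=> [A hA] [B hB]; exists (Num.min A B) => n hn.
by rewrite /ladd hA ?hB ?addr0 //; move: hn; rewrite lt_min => /andP[].
Qed.
Lemma lscale_supp c f A : supp_ge f A -> supp_ge (lscale c f) A.
Proof. by move=> h n hn; rewrite /lscale h ?mulr0. Qed.
Lemma lscale_laurent c f : is_laurent f -> is_laurent (lscale c f).
Proof. by move=> [A hA]; exists A; apply: lscale_supp. Qed.
Lemma lopp_laurent f : is_laurent f -> is_laurent (lopp f).
Proof. by move=> [A hA]; exists A => n hn; rewrite /lopp hA ?oppr0. Qed.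
Lemma lzero_laurent : is_laurent (lzero K).
Proof. by exists 0. Qed.
Lemma lzero_supp A : supp_ge (lzero K) A.
Proof. by []. Qed.

Lemma lmulC f g : is_laurent f -> is_laurent g -> lmul f g = lmul g f.
Proof.
move=> lf lg; have ha := laurent_lbound lf; have hb := laurent_lbound lg.
set a := lbound f in ha *; set b := lbound g in hb *.
apply: (@eq_from_nf _ _ (a + b)); first exact: lmul_supp.
  by rewrite addrC; apply: lmul_supp.
move=> i; rewrite (lmul_nf ha hb lf lg) [a + b]addrC (lmul_nf hb ha lg lf).
rewrite (reindex_inj rev_ord_inj) /=; apply: eq_bigr => j _.
rewrite mulrC; congr (g _ * f _); have := ltn_ord j; rewrite /= ?subSS; lia.
Qed.

Lemma lmulA f g h : is_laurent f -> is_laurent g -> is_laurent h ->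
  lmul (lmul f g) h = lmul f (lmul g h).
Proof.
move=> lf lg lh.
have ha := laurent_lbound lf; have hb := laurent_lbound lg; have hc := laurent_lbound lh.
set a := lbound f in ha *; set b := lbound g in hb *; set c := lbound h in hc *.
have lfg := lmul_laurent lf lg; have lgh := lmul_laurent lg lh.
have sfg := lmul_supp ha hb lf lg; have sgh := lmul_supp hb hc lg lh.
apply: (@eq_from_nf _ _ (a + b + c)); first exact: lmul_supp.
  by rewrite -addrA; apply: lmul_supp.
move=> i.
pose P (u : laurent K) (s : int) := \poly_(k < i.+1) u (s + k%:Z).
have key : forall (u v : laurent K) s t, supp_ge u s -> supp_ge v t ->
    is_laurent u -> is_laurent v -> forall j : nat, (j <= i)%N ->
    lmul u v (s + t + j%:Z) = (P u s * P v t)`_j.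
  move=> u v s t hu hv lu lv j hj; rewrite (lmul_nf hu hv lu lv) coefM.
  apply: eq_bigr => l _; rewrite !coef_poly.
  have hl := ltn_ord l.
  have -> : (l < i.+1)%N by lia.
  by have -> : (j - l < i.+1)%N by lia.
rewrite (key _ _ _ _ sfg hc lfg lh i (leqnn i)).
rewrite -[a + b + c]addrA (key _ _ _ _ ha sgh lf lgh i (leqnn i)).
have E1 : P (lmul f g) (a + b) = take_poly i.+1 (P f a * P g b).
  apply/polyP => j; rewrite coef_take_poly coef_poly.
  by case: ifP => hj //; rewrite key //; lia.
have E2 : P (lmul g h) (b + c) = take_poly i.+1 (P g b * P h c).
  apply/polyP => j; rewrite coef_take_poly coef_poly.
  by case: ifP => hj //; rewrite key //; lia.
rewrite E1 E2 !coefM; transitivity (((P f a * P g b) * P h c)`_i).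
  rewrite coefM; apply: eq_bigr => j _; rewrite coef_take_poly.
  by have -> : (j < i.+1)%N by exact: ltn_ord.
rewrite -mulrA coefM; apply: eq_bigr => j _; rewrite coef_take_poly.
by have -> : (i - j < i.+1)%N by lia.
Qed.

Lemma lmulDr f g h : is_laurent f -> is_laurent g -> is_laurent h ->
  lmul f (ladd g h) = ladd (lmul f g) (lmul f h).
Proof.
move=> lf lg lh.
have ha := laurent_lbound lf; have hb := laurent_lbound lg; have hc := laurent_lbound lh.
set a := lbound f in ha *; set B := Num.min (lbound g) (lbound h).
have hb' : supp_ge g B by apply: supp_ge_le hb _; rewrite ge_min lexx.
have hc' : supp_ge h B by apply: supp_ge_le hc _; rewrite ge_min lexx orbT.
have lgh := ladd_laurent lg lh.
apply: (@eq_from_nf _ _ (a + B)).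
- by apply: lmul_supp => //; apply: ladd_supp.
- by apply: ladd_supp; apply: lmul_supp.
move=> i; rewrite (lmul_nf ha (ladd_supp hb' hc') lf lgh) /ladd.
rewrite (lmul_nf ha hb' lf lg) (lmul_nf ha hc' lf lh) -big_split /=.
by apply: eq_bigr => j _; rewrite mulrDr.
Qed.

Lemma lmulDl f g h : is_laurent f -> is_laurent g -> is_laurent h ->
  lmul (ladd g h) f = ladd (lmul g f) (lmul h f).
Proof.
move=> lf lg lh; rewrite lmulC ?lmulDr ?(lmulC lf) //; exact: ladd_laurent.
Qed.

Lemma lmulZl c f g : is_laurent f -> is_laurent g ->
  lmul (lscale c f) g = lscale c (lmul f g).
Proof.
move=> lf lg; have ha := laurent_lbound lf; have hb := laurent_lbound lg.
have lcf := lscale_laurent c lf.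
apply: (@eq_from_nf _ _ (lbound f + lbound g)).
- by apply: lmul_supp => //; apply: lscale_supp.
- by apply: lscale_supp; apply: lmul_supp.
move=> i; rewrite (lmul_nf (lscale_supp c ha) hb lcf lg) /lscale (lmul_nf ha hb lf lg).
by rewrite mulr_sumr; apply: eq_bigr => j _; rewrite mulrA.
Qed.

Lemma lmulZr c f g : is_laurent f -> is_laurent g ->
  lmul f (lscale c g) = lscale c (lmul f g).
Proof.
move=> lf lg; rewrite lmulC ?lmulZl ?(lmulC lf) //; exact: lscale_laurent.
Qed.

Lemma lmul_monol m f : is_laurent f -> lmul (mono m) f = fun n => f (n - m).
Proof.
move=> lf; have ha := laurent_lbound lf.
apply: (@eq_from_nf _ _ (m + lbound f)).
- by apply: lmul_supp => //; [apply: mono_supp | apply: mono_laurent].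
- move=> n hn; apply: ha; lia.
move=> i; rewrite (lmul_nf (@mono_supp m) ha (@mono_laurent m) lf).
rewrite big_ord_recl /= /mono addr0 eqxx mul1r big1 ?addr0.
  by congr f; rewrite subn0; lia.
move=> j _; case: eqP; last by rewrite mul0r.
rewrite /bump /=; lia.
Qed.

Lemma lmul_monor m f : is_laurent f -> lmul f (mono m) = fun n => f (n - m).
Proof. by move=> lf; rewrite lmulC ?lmul_monol //; exact: mono_laurent. Qed.

Lemma lmul_mono a b : lmul (mono a) (mono b) = mono (a + b).
Proof.
rewrite lmul_monol; last exact: mono_laurent.
apply: functional_extensionality => n; rewrite /mono.
by case: eqP => e; case: eqP => e' //; lia.
Qed.

Lemma lmul1 f : is_laurent f -> lmul (lone K) f = f.
Proof.
move=> lf; rewrite lone_mono lmul_monol //.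
by apply: functional_extensionality => n; rewrite subr0.
Qed.

Lemma lmul0 f : lmul f (lzero K) = lzero K.
Proof.
apply: functional_extensionality => n; rewrite /lmul.
by case: ifP => // _; rewrite big1 // => i _; rewrite mulr0.
Qed.

Lemma lopp_scale f : lopp f = lscale (-1) f.
Proof. by apply: functional_extensionality => n; rewrite /lopp /lscale mulN1r. Qed.

Lemma lscaleA c d f : lscale c (lscale d f) = lscale (c * d) f.
Proof. by apply: functional_extensionality => n; rewrite /lscale mulrA. Qed.

Lemma lscale1 f : lscale 1 f = f.
Proof. by apply: functional_extensionality => n; rewrite /lscale mul1r. Qed.

End S2.
Section S3.
Variable K : fieldType.
Implicit Types (f g h : laurent K).

Lemma lderiv_supp f A : supp_ge f A -> supp_ge (lderiv f) (A - 1).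
Proof. move=> h n hn; rewrite /lderiv h ?mulr0 //; lia. Qed.
Lemma lderiv_laurent f : is_laurent f -> is_laurent (lderiv f).
Proof. by move=> [A hA]; exists (A - 1); apply: lderiv_supp. Qed.
Lemma lderiv_add f g : lderiv (ladd f g) = ladd (lderiv f) (lderiv g).
Proof. by apply: functional_extensionality => n; rewrite /lderiv /ladd mulrDr. Qed.
Lemma lderiv_scale c f : lderiv (lscale c f) = lscale c (lderiv f).
Proof.
by apply: functional_extensionality => n; rewrite /lderiv /lscale mulrCA.
Qed.
Lemma lderiv_zero : lderiv (lzero K) = lzero K.
Proof. by apply: functional_extensionality => n; rewrite /lderiv /lzero mulr0. Qed.
Lemma lderiv_one : lderiv (lone K) = lzero K.
Proof.
apply: functional_extensionality => n; rewrite /lderiv /lone /lzero.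
case: eqP => e; last by rewrite mulr0.
by rewrite e mulr1.
Qed.
Lemma lderiv_x : lderiv (lx K) = lone K.
Proof.
apply: functional_extensionality => n; rewrite /lderiv /lone /lx.
have -> : (n + 1 == 1) = (n == 0) by apply/eqP/eqP; lia.
by case: eqP => [->|_]; rewrite ?add0r ?mulr1 ?mulr0.
Qed.

Lemma lderiv_mul f g : is_laurent f -> is_laurent g ->
  lderiv (lmul f g) = ladd (lmul (lderiv f) g) (lmul f (lderiv g)).
Proof.
move=> lf lg; have ha := laurent_lbound lf; have hb := laurent_lbound lg.
set A := lbound f in ha *; set B := lbound g in hb *.
have lf' := lderiv_laurent lf; have lg' := lderiv_laurent lg.
have ha' := lderiv_supp ha; have hb' := lderiv_supp hb.
have sfg := lmul_supp ha hb lf lg.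
apply: (@eq_from_nf _ _ _ (A + B - 1)).
- by apply: lderiv_supp.
- apply: ladd_supp.
  + by apply: (supp_ge_le (lmul_supp ha' hb lf' lg)); lia.
  + by apply: (supp_ge_le (lmul_supp ha hb' lf lg')); lia.
move=> i; rewrite {1}/lderiv.
have -> : A + B - 1 + i%:Z + 1 = A + B + i%:Z by lia.
rewrite (lmul_nf ha hb lf lg) /ladd.
have -> : A + B - 1 + i%:Z = A - 1 + B + i%:Z by lia.
rewrite (lmul_nf ha' hb lf' lg).
have -> : A - 1 + B + i%:Z = A + (B - 1) + i%:Z by lia.
rewrite (lmul_nf ha hb' lf lg') -big_split mulr_sumr /=.
apply: eq_bigr => j _; rewrite /lderiv.
have -> : A - 1 + j%:Z + 1 = A + j%:Z by lia.
have -> : B - 1 + (i - j)%N%:Z + 1 = B + (i - j)%N%:Z by lia.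
have -> : A + B + i%:Z = (A + j%:Z) + (B + (i - j)%N%:Z).
  have := ltn_ord j; lia.
rewrite intrD; ring.
Qed.

Lemma lsumE n (F : 'I_n -> laurent K) k :
  (\big[@ladd K/lzero K]_(i < n) F i) k = \sum_(i < n) F i k.
Proof.
by apply: (big_morph (fun f : laurent K => f k)).
Qed.

Lemma lsum_laurent n (F : 'I_n -> laurent K) :
  (forall i, is_laurent (F i)) -> is_laurent (\big[@ladd K/lzero K]_(i < n) F i).
Proof.
elim: n F => [|n IH] F H; first by rewrite big_ord0; exact: lzero_laurent.
by rewrite big_ord_recl /=; apply: ladd_laurent => //; apply: IH.
Qed.

Section D.
Variable p : laurent K.
Hypothesis lp : is_laurent p.

Definition D g := lmul p (lderiv g).
Definition Dn n g := iter n D g.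

Lemma D_supp g B : supp_ge g B -> is_laurent g -> supp_ge (D g) (lbound p + (B - 1)).
Proof.
move=> hg lg; apply: lmul_supp => //; first exact: laurent_lbound.
  exact: lderiv_supp.
exact: lderiv_laurent.
Qed.
Lemma D_laurent g : is_laurent g -> is_laurent (D g).
Proof. by move=> lg; apply: lmul_laurent => //; apply: lderiv_laurent. Qed.
Lemma D_add g h : is_laurent g -> is_laurent h -> D (ladd g h) = ladd (D g) (D h).
Proof. by move=> lg lh; rewrite /D lderiv_add lmulDr //; apply: lderiv_laurent. Qed.
Lemma D_scale c g : is_laurent g -> D (lscale c g) = lscale c (D g).
Proof. by move=> lg; rewrite /D lderiv_scale lmulZr //; apply: lderiv_laurent. Qed.
Lemma D_zero : D (lzero K) = lzero K.
Proof. by rewrite /D lderiv_zero lmul0. Qed.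
Lemma D_one : D (lone K) = lzero K.
Proof. by rewrite /D lderiv_one lmul0. Qed.
Lemma D_mul f g : is_laurent f -> is_laurent g ->
  D (lmul f g) = ladd (lmul (D f) g) (lmul f (D g)).
Proof.
move=> lf lg; have lf' := lderiv_laurent lf; have lg' := lderiv_laurent lg.
rewrite /D lderiv_mul // lmulDr //; try by apply: lmul_laurent.
by rewrite -(lmulA lp lf' lg) -(lmulA lp lf lg') (lmulC lp lf) (lmulA lf lp lg').
Qed.

Lemma Dn_laurent n g : is_laurent g -> is_laurent (Dn n g).
Proof. by move=> lg; elim: n => //= n IH; apply: D_laurent. Qed.
Lemma Dn_add n g h : is_laurent g -> is_laurent h ->
  Dn n (ladd g h) = ladd (Dn n g) (Dn n h).
Proof.
move=> lg lh; elim: n => //= n IH; rewrite IH D_add //; exact: Dn_laurent.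
Qed.
Lemma Dn_scale n c g : is_laurent g -> Dn n (lscale c g) = lscale c (Dn n g).
Proof. move=> lg; elim: n => //= n IH; rewrite IH D_scale //; exact: Dn_laurent. Qed.
Lemma Dn_supp n g B : supp_ge g B -> is_laurent g ->
  supp_ge (Dn n g) (B + n%:Z * (lbound p - 1)).
Proof.
move=> hg lg; elim: n => [|n IH] /=; first by rewrite mul0r addr0.
have := D_supp IH (Dn_laurent n lg).
by have -> : lbound p + (B + n%:Z * (lbound p - 1) - 1) = B + n.+1%:Z * (lbound p - 1)
  by lia.
Qed.
Lemma Dn_one n : Dn n.+1 (lone K) = lzero K.
Proof.
elim: n => [|n IH]; first exact: D_one.
by change (D (Dn n.+1 (lone K)) = lzero K); rewrite IH D_zero.
Qed.

Lemma D_lsum n (F : 'I_n -> laurent K) : (forall i, is_laurent (F i)) ->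
  D (\big[@ladd K/lzero K]_(i < n) F i) = \big[@ladd K/lzero K]_(i < n) D (F i).
Proof.
elim: n F => [|n IH] F H; first by rewrite !big_ord0 D_zero.
rewrite !big_ord_recl /= D_add ?IH //; exact: lsum_laurent.
Qed.

Lemma pascal_sum n (T : nat -> nat -> K) :
  \sum_(i < n.+1) 'C(n, i)%:R * (T i.+1 (n - i)%N + T i (n - i).+1) =
  \sum_(i < n.+2) 'C(n.+1, i)%:R * T i (n.+1 - i)%N.
Proof.
have E2 : \sum_(i < n.+1) 'C(n, i)%:R * T i (n - i).+1 =
   T 0%N n.+1 + \sum_(i < n.+1) 'C(n, i.+1)%:R * T i.+1 (n - i)%N.
  rewrite big_ord_recl bin0 subn0 mul1r; congr (_ + _).
  rewrite big_ord_recr /= bin_small // mul0r addr0.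

  apply: eq_bigr => i _; rewrite ?lift0 /bump ?leq0n ?add1n.
  congr (_ * T _ _); have := ltn_ord i; lia.
rewrite [RHS]big_ord_recl bin0 subn0 mul1r.
under eq_bigr => i _ do rewrite mulrDr.
rewrite big_split /= E2.
under [X in _ = _ + X]eq_bigr => i _ do rewrite ?lift0 /bump ?leq0n ?add1n binS natrD mulrDl subSS.
by rewrite big_split /= addrCA; congr (_ + _); exact: addrC.
Qed.

Lemma Dn_mul n f g : is_laurent f -> is_laurent g ->
  Dn n (lmul f g) = \big[@ladd K/lzero K]_(i < n.+1)
     lscale 'C(n, i)%:R (lmul (Dn i f) (Dn (n - i) g)).
Proof.
move=> lf lg; elim: n => [|n IH].
  rewrite big_ord_recl big_ord0; apply: functional_extensionality => k.
  by rewrite /ladd /lscale /lzero addr0 /= mul1r.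
rewrite /= -/(Dn n _) IH D_lsum; last first.
  by move=> i; apply: lscale_laurent; apply: lmul_laurent; apply: Dn_laurent.
apply: functional_extensionality => k; rewrite !lsumE.
rewrite [in RHS]/lscale -(pascal_sum n (fun a b => lmul (Dn a f) (Dn b g) k)).
apply: eq_bigr => i _.
rewrite D_scale; last by apply: lmul_laurent; apply: Dn_laurent.
rewrite D_mul; try exact: Dn_laurent.
by rewrite /lscale /ladd /=.
Qed.

End D.
End S3.
Section S4.
Variable K : fieldType.
Hypothesis Hc : forall n : nat, n.+1%:R != 0 :> K.
Implicit Types (f g h : laurent K).

Lemma fact_neq0 n : (n`!)%:R != 0 :> K.
Proof. by have := fact_gt0 n; case: (n`!) => // m _; exact: Hc. Qed.

Lemma coef_fact i j : (i <= j)%N ->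
  (i`!%:R)^-1 * ((j - i)`!%:R)^-1 = (j`!%:R)^-1 * 'C(j, i)%:R :> K.
Proof.
move=> hij; rewrite -(bin_fact hij) !natrM.
have h1 := fact_neq0 i; have h2 := fact_neq0 (j - i).
have h3 : 'C(j, i)%:R != 0 :> K.
  have := bin_gt0 j i; rewrite hij; case: ('C(j, i)) => // m _; exact: Hc.
by field; rewrite h1 h2 h3.
Qed.

Section P.
Variable p : laurent K.
Hypothesis lp : is_laurent p.

Definition Gs h : lser K := fun j => lscale (j`!%:R)^-1 (Dn p j h).

Lemma Gs_laurent h j : is_laurent h -> is_laurent (Gs h j).
Proof. by move=> lh; apply: lscale_laurent; apply: Dn_laurent. Qed.

Lemma Gs_mul h1 h2 : is_laurent h1 -> is_laurent h2 ->
  smul (Gs h1) (Gs h2) = Gs (lmul h1 h2).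
Proof.
move=> l1 l2; apply: functional_extensionality => j.
apply: functional_extensionality => k.
rewrite /smul lsumE /Gs {3}/lscale Dn_mul // lsumE mulr_sumr.
apply: eq_bigr => i _.
rewrite lmulZl ?lmulZr; try (by apply: Dn_laurent); last first.
  by apply: lscale_laurent; apply: Dn_laurent.
rewrite /lscale mulrA coef_fact ?mulrA //.
by have := ltn_ord i; rewrite ltnS.
Qed.

Lemma Gs_one : Gs (lone K) = sone K.
Proof.
apply: functional_extensionality => j; rewrite /Gs /sone.
case: j => [|j].
  by rewrite /= invr1 lscale1.
by rewrite Dn_one //=; apply: functional_extensionality => k; rewrite /lscale /lzero mulr0.
Qed.

Lemma Gs_x : Gs (lx K) = phi_exp p.
Proof. by []. Qed.

Lemma Gs_mono_pow (s : int) (n : nat) :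
  iter n (smul (Gs (mono K s))) (sone K) = Gs (mono K (n%:Z * s)).
Proof.
elim: n => [|n IH] /=; first by rewrite mul0r -lone_mono Gs_one.
rewrite IH Gs_mul; try exact: mono_laurent.
by rewrite lmul_mono; congr (Gs (mono _ _)); lia.
Qed.

End P.

Lemma lorder_lx : lorder (lx K) = 1.
Proof.
have ex : exists v : int, lx K v != 0 /\ (forall n : int, n < v -> lx K n = 0).
  exists 1; split; first by rewrite /lx eqxx oner_eq0.
  by move=> n hn; rewrite /lx; case: eqP => // e; lia.
have [H _] := epsilon_spec (inhabits (0:int)) _ ex.
rewrite /lorder; move: H; set v := epsilon _ _.
by rewrite /lx; case: (v =P 1) => // _; rewrite eqxx.
Qed.

Lemma ps_inv_seq_lx n :
  size (ps_inv_seq (fun i : nat => lx K (1 + i%:Z)) n) = n.+1 /\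
  forall i, (i <= n)%N ->
    nth 0 (ps_inv_seq (fun i : nat => lx K (1 + i%:Z)) n) i = if i == 0%N then 1 else 0.
Proof.
elim: n => [|n [IHs IHn]] /=.
  by split => // i; rewrite leqn0 => /eqP ->; rewrite /lx addr0 eqxx invr1.
rewrite size_rcons IHs; split => // i hi; rewrite nth_rcons IHs.
case: ltnP => hin; first by apply: IHn.
have -> : i = n.+1 by apply/eqP; rewrite eqn_leq hi hin.
rewrite eqxx /=.
rewrite big1 ?mulr0 // => k _; rewrite /lx.
by case: eqP => e; [lia | rewrite mul0r].
Qed.

Lemma linv_lx : linv (lx K) = mono K (-1).
Proof.
apply: functional_extensionality => n; rewrite /linv lorder_lx /mono /ps_inv.
have [_ H] := ps_inv_seq_lx (absz (n + 1)%R).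
case: ifP => hn.
  rewrite H //; have -> : (absz (n + 1)%R == 0%N) = (n == -1) by apply/eqP/eqP; lia.
  by [].
by case: eqP => // e; lia.
Qed.

Lemma sinv_seq_size (psi : lser K) n : size (sinv_seq psi n) = n.+1.
Proof. by elim: n => //= n IH; rewrite size_rcons IH. Qed.

Lemma sinv_seq_nth (psi : lser K) n i : (i <= n)%N ->
  nth (lzero K) (sinv_seq psi n) i = sinv psi i.
Proof.
elim: n => [|n IH] hi; first by move: hi; rewrite leqn0 => /eqP ->.
rewrite /= nth_rcons sinv_seq_size.
case: ltnP => hin; first by apply: IH.
have e : i = n.+1 by apply/eqP; rewrite eqn_leq hi hin.
subst i; rewrite eqxx /sinv /= nth_rcons sinv_seq_size ltnn eqxx //.
Qed.

Lemma sinv_rec (psi : lser K) n : sinv psi n.+1 =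
  lopp (lmul (linv (psi 0%N))
    (\big[@ladd K/lzero K]_(k < n.+1) lmul (psi k.+1) (sinv psi (n - k)%N))).
Proof.
rewrite {1}/sinv /= nth_rcons sinv_seq_size ltnn eqxx.
congr (lopp (lmul _ _)); apply: eq_bigr => k _; rewrite sinv_seq_nth //.
exact: leq_subr.
Qed.

Lemma sinv0 (psi : lser K) : sinv psi 0%N = linv (psi 0%N).
Proof. by []. Qed.

Section P2.
Variable p : laurent K.
Hypothesis lp : is_laurent p.

Lemma Gs0 h : Gs p h 0%N = h.
Proof. by rewrite /Gs /= invr1 lscale1. Qed.

Lemma sinv_Gs : sinv (Gs p (lx K)) = Gs p (mono K (-1)).
Proof.
apply: functional_extensionality => j; elim/ltn_ind: j => -[|n] IH.
  by rewrite sinv0 Gs0 Gs0 linv_lx.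
rewrite sinv_rec Gs0 linv_lx.
set gm := Gs p (mono K (-1)).
have lgm : forall i, is_laurent (gm i) by move=> i; apply: Gs_laurent => //; exact: mono_laurent.
have lgx : forall i, is_laurent (Gs p (lx K) i) by move=> i; apply: Gs_laurent => //; rewrite lx_mono; exact: mono_laurent.
set S := \big[@ladd K/lzero K]_(k < n.+1) _.
have ES : S = \big[@ladd K/lzero K]_(k < n.+1) lmul (Gs p (lx K) k.+1) (gm (n - k)%N).
  by apply: eq_bigr => k _; rewrite IH // ltnS leq_subr.
have E := Gs_mul lp (@mono_laurent K 1) (@mono_laurent K (-1)).
rewrite lmul_mono -lx_mono addrN -lone_mono Gs_one // in E.
have E1 := congr1 (fun F => F n.+1) E; rewrite /smul /sone /= big_ord_recl Gs0 in E1.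
have SE : S = lscale (-1) (lmul (lx K) (gm n.+1)).
  apply: functional_extensionality => k.
  have := congr1 (fun F => F k) E1; rewrite ES /ladd /lscale /lzero => /eqP.
  rewrite addr_eq0 => /eqP ->; rewrite mulN1r opprK; congr (_ k).
rewrite SE lmulZr ?lopp_scale ?lscaleA; try (by apply: lmul_laurent; [exact: mono_laurent|]); last exact: mono_laurent.
rewrite -lmulA; try exact: mono_laurent.
rewrite lx_mono lmul_mono addNr -lone_mono lmul1 ?lgm //.
  by rewrite mulN1r opprK lscale1.
exact: lgm.
Qed.

Lemma spow_Gs (m : int) : spow (Gs p (lx K)) m = Gs p (mono K m).
Proof.
rewrite /spow; case: ifP => hm.
  by rewrite lx_mono Gs_mono_pow //; congr (Gs p (mono _ _)); lia.
by rewrite sinv_Gs Gs_mono_pow //; congr (Gs p (mono _ _)); lia.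
Qed.

End P2.
End S4.
Section S5.
Variable K : fieldType.
Hypothesis Hc : forall n : nat, n.+1%:R != 0 :> K.
Variable p : laurent K.
Hypothesis lp : is_laurent p.

Lemma Dn_lsum n m (F : 'I_m -> laurent K) : (forall i, is_laurent (F i)) ->
  Dn p n (\big[@ladd K/lzero K]_(i < m) F i) = \big[@ladd K/lzero K]_(i < m) Dn p n (F i).
Proof.
move=> HF; elim: n => [|n IH] //.
change (D p (Dn p n (\big[@ladd K/lzero K]_(i < m) F i)) =
  \big[@ladd K/lzero K]_(i < m) D p (Dn p n (F i))).
rewrite IH D_lsum //; move=> i; exact: Dn_laurent.
Qed.

Lemma Dn_expand j (f : laurent K) k : is_laurent f -> exists N0 : nat, forall M : nat,
  (N0 <= M)%N ->
  \sum_(i < (2 * M).+1) f (i%:Z - M%:Z) * Dn p j (mono K (i%:Z - M%:Z)) k = Dn p j f k.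
Proof.
move=> lf; have hA := laurent_lbound lf; set A := lbound f in hA.
set c := lbound p - 1.
set jc := j%:Z * c.
set N := Num.max A (k - jc).
have hAN : A <= N by rewrite le_max lexx.
have hkN : k - jc <= N by rewrite le_max lexx orbT.
set F := fun t => f t * Dn p j (mono K t) k.
have HF : forall t, t < A \/ N < t -> F t = 0.
  move=> t [] ht; first by rewrite /F hA // mul0r.
  rewrite /F (Dn_supp lp (n:=j) (@mono_supp K t) (@mono_laurent K t)) ?mulr0 //.
  rewrite -/c -/jc; lia.
exists (absz A + absz N)%N => M hM.
have -> : \sum_(i < (2 * M).+1) f (i%:Z - M%:Z) * Dn p j (mono K (i%:Z - M%:Z)) k
    = wsum (- M%:Z) M%:Z F.
  rewrite /wsum ifT; last lia.
  have -> : absz (M%:Z - - M%:Z)%R = (2 * M)%N by lia.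
  by apply: eq_bigr => i _; rewrite /F addrC.
rewrite (wsum_ext HF); [|lia|lia].
pose lo := fun n => if n <= N then f n else 0.
pose hi := fun n => if n <= N then 0 else f n.
have Ef : f = ladd lo hi.
  apply: functional_extensionality => n; rewrite /ladd /lo /hi.
  by case: ifP; rewrite ?addr0 ?add0r.
have slo : supp_ge lo A by move=> n hn; rewrite /lo hA //; case: ifP.
have shi : supp_ge hi (N + 1).
  by move=> n hn; rewrite /hi; case: ifP => // h; lia.
have llo : is_laurent lo by exists A.
have lhi : is_laurent hi by exists (N + 1).
have Elo : lo = \big[@ladd K/lzero K]_(i < (absz (N - A)%R).+1)
                  lscale (f (A + i%:Z)) (mono K (A + i%:Z)).
  apply: functional_extensionality => n; rewrite lsumE /lscale.
  transitivity (wsum A N (fun t => f t * mono K t n)); last first.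
    by rewrite /wsum ifT.
  rewrite /lo; case: ifP => hn.
    rewrite (@wsum_eq K A N n n (fun t => f t * mono K t n)).
    - by rewrite /wsum lexx subrr big_ord1 addr0 /mono eqxx mulr1.
    - move=> t [] ht; first by rewrite hA ?mul0r.
      by rewrite /mono; case: eqP => e; [lia | rewrite mulr0].
    - by move=> t ht; rewrite /mono; case: eqP => e; [lia | rewrite mulr0].
  rewrite /wsum; case: ifP => // _; rewrite big1 // => i _.
  rewrite /mono; case: eqP => e; last by rewrite mulr0.
  have := ltn_ord i; lia.
rewrite Ef Dn_add // /ladd.
rewrite (Dn_supp lp (n:=j) shi lhi) ?addr0; last by rewrite -/c -/jc; lia.
rewrite Elo Dn_lsum; last by move=> i; apply: lscale_laurent; exact: mono_laurent.
rewrite lsumE /wsum ifT //; apply: eq_bigr => i _.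
by rewrite Dn_scale //; exact: mono_laurent.
Qed.

Lemma psum_Gs (f : laurent K) j k : is_laurent f -> exists M0 : nat, forall M : nat,
  (M0 <= M)%N -> psum f (Gs p (lx K)) M j k = Gs p f j k.
Proof.
move=> lf; have [N0 HN] := Dn_expand j k lf.
exists N0 => M hM; rewrite /psum.
under eq_bigr => i _ do rewrite spow_Gs // /Gs /lscale mulrCA.
by rewrite -mulr_sumr HN.
Qed.

End S5.
Section S6.
Variable K : fieldType.
Hypothesis Hc : forall n : nat, n.+1%:R != 0 :> K.

Definition agree (J : nat) (psi chi : lser K) := forall i, (i <= J)%N -> psi i = chi i.

Lemma agree_smul J a b c d : agree J a c -> agree J b d -> agree J (smul a b) (smul c d).
Proof.
move=> h1 h2 i hi; rewrite /smul; apply: eq_bigr => l _.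
have hl := ltn_ord l.
rewrite h1 ?h2 //; [exact: leq_trans (leq_subr _ _) hi | apply: leq_trans hi; lia].
Qed.

Lemma agree_sinv J a c : agree J a c -> agree J (sinv a) (sinv c).
Proof.
move=> h i; elim/ltn_ind: i => -[|n] IH hi; first by rewrite !sinv0 h.
rewrite !sinv_rec h //; congr (lopp (lmul _ _)); apply: eq_bigr => l _.
have hl := ltn_ord l.
rewrite h ?IH //; try lia.
Qed.

Lemma agree_iter J a c n : agree J a c ->
  agree J (iter n (smul a) (sone K)) (iter n (smul c) (sone K)).
Proof. move=> h; elim: n => [|n IH] //=; exact: agree_smul. Qed.

Lemma agree_spow J a c m : agree J a c -> agree J (spow a m) (spow c m).
Proof.
move=> h; rewrite /spow; case: ifP => _; apply: agree_iter => //.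
exact: agree_sinv.
Qed.

Lemma agree_psum J a c f M j k : agree J a c -> (j <= J)%N ->
  psum f a M j k = psum f c M j k.
Proof.
move=> h hj; rewrite /psum; apply: eq_bigr => i _.
by rewrite (agree_spow _ h).
Qed.

Section P.
Variable p : laurent K.
Hypothesis lp : is_laurent p.

Lemma Gs1x : Gs p (lx K) 1%N = p.
Proof.
rewrite /Gs /= invr1 lscale1 /D lderiv_x lmulC ?lmul1 //.
by rewrite lone_mono; exact: mono_laurent.
Qed.

Lemma part1 : associate (Gs p (lx K)).
Proof.
split; first by move=> n; apply: Gs_laurent => //; rewrite lx_mono; exact: mono_laurent.
split; first by move=> k; rewrite Gs0.
move=> n; rewrite /subst_eq => j k.
have lf : is_laurent (Gs p (lx K) n) by apply: Gs_laurent => //; rewrite lx_mono; exact: mono_laurent.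
have [M0 HM] := psum_Gs Hc lp j k lf.
exists M0.
move=> M hM.
rewrite HM //.
rewrite /Gs Dn_scale; last by apply: Dn_laurent => //; rewrite lx_mono; exact: mono_laurent.
rewrite /Dn -iterD /lscale mulrA mulrA [_^-1 * _^-1]mulrC.
have := coef_fact Hc (leq_addr j n); rewrite addKn => ->.
  by rewrite [(j + n)%N]addnC [_^-1 * _]mulrC.
exact: lp.
Qed.

End P.

Lemma part2 (phi : lser K) : associate phi ->
  forall n, phi n = Gs (phi 1%N) (lx K) n.
Proof.
move=> [Hl [H0 Hs]]; set p := phi 1%N; have lp : is_laurent p := Hl 1%N.
have lgx : forall i, is_laurent (Gs p (lx K) i).
  by move=> i; apply: Gs_laurent => //; rewrite lx_mono; exact: mono_laurent.
have Hag : agree 1 phi (Gs p (lx K)).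
  move=> i; case: i => [|[|i]] // _.
    by rewrite Gs0; apply: functional_extensionality => k; rewrite H0.
  by rewrite Gs1x.
elim=> [|n IH].
  by rewrite Gs0; apply: functional_extensionality => k; rewrite H0.
apply: functional_extensionality => k.
have [M1 H1] := Hs n 1%N k.
have [M2 H2] := psum_Gs Hc lp 1%N k (Hl n).
have := H1 (maxn M1 M2) (leq_maxl _ _).
rewrite (@agree_psum 1 phi (Gs p (lx K)) (phi n) (maxn M1 M2) 1%N k Hag) // H2 ?leq_maxr // IH.
rewrite addn1 binSn /Gs /= invr1 /lscale mul1r => E.
rewrite -/(Dn p n (lx K)) D_scale in E; last by apply: Dn_laurent => //; rewrite lx_mono; exact: mono_laurent.
rewrite /lscale in E.
have hn := Hc n; have hf := fact_neq0 Hc n.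
rewrite factS natrM.
change (phi n.+1 k = ((n.+1%:R * n`!%:R)^-1 * D p (Dn p n (lx K)) k)).
apply: (mulfI hn); rewrite -E; field.
  have -> : 1 + n%:R = n.+1%:R :> K by rewrite -natr1 addrC.
  by rewrite hn hf.
exact: lp.
Qed.

End S6.

Unset Implicit Arguments.
Local Open Scope complex_scope.

Theorem proposition2p4 (R : realType) :
  (forall p : laurent R[i], is_laurent p -> associate (phi_exp p)) /\
  (forall phi : lser R[i], associate phi ->
     (exists p : laurent R[i], is_laurent p /\
        forall (n : nat) (k : int), phi n k = phi_exp p n k) /\
     (forall p : laurent R[i], is_laurent p ->
        (forall (n : nat) (k : int), phi n k = phi_exp p n k) ->
        forall k : int, p k = phi 1%N k)).
Proof.
have Hc : forall n : nat, n.+1%:R != 0 :> R[i] by move=> n; rewrite pnatr_eq0.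
split.
  by move=> p lp; rewrite -Gs_x; apply: part1.
move=> phi H; split.
  exists (phi 1%N); split; first exact: (H.1 1%N).
  by move=> n k; rewrite (part2 Hc H n).
move=> p lp Hp k; rewrite Hp -Gs_x.
by rewrite Gs1x.
Qed.
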